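(* Let $T:[a,b]\times[c,d]\to\mathbb{R}$ be the function constructed from a generating function $\phi$ as described in the context. If $\phi$ is of bounded variation in the sense of Arzelà on $[a_0,a_1]\times[c,d]$, then the box dimension of the graph $G(T)$ exists and equals $2$.
   Context: Let $a<b$, $c<d$. Set $a_0=a$ and $a_n=a+(b-a)(\tfrac12+\tfrac14+\dots+\tfrac1{2^n})$ for $n\in\mathbb{N}$, so $a_n\uparrow b$. Let $\phi:[a_0,a_1]\times[c,d]\to\mathbb{R}$ be continuous with $\phi(a_0,y)=\phi(a_1,y)$ for all $y\in[c,d]$ (the generating function). For $n\ge1$ let $\psi_n:[a_{n-1},a_n]\to[a_0,a_1]$ be the increasing affine bijection $\psi_n(x)=\frac{2^n[(a_1-a_0)x+a_0a_n-a_1a_{n-1}]}{b-a}$. Let $F_1=\phi$ on $[a_0,a_1]\times[c,d]$ and for $n\ge2$, $F_n(x,y)=\frac1n\phi(\psi_n(x),y)+\frac{n-1}{n}\phi(a_0,y)$ for $(x,y)\in[a_{n-1},a_n]\times[c,d]$. Define $T_n(x,y)=F_k(x,y)$ for $(x,y)\in[a_{k-1},a_k]\times[c,d]$, $k=1,\dots,n$, and $T_n(x,y)=F_n(a_n,y)$ for $(x,y)\in[a_n,b]\times[c,d]$; and $T(x,y)=\lim_{n\to\infty}T_n(x,y)$. Bounded variation in the sense of Arzelà on a rectangle $[\alpha_1,\alpha_2]\times[c,d]$: there is $K$ such that for all $m$ and all $\alpha_1=x_0\le\dots\le x_m=\alpha_2$, $c=y_0\le\dots\le y_m=d$, $\sum_{i=0}^{m-1}|\phi(x_{i+1},y_{i+1})-\phi(x_i,y_i)|\le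 K$. $G(T)=\{(x,y,T(x,y))\}\subset\mathbb{R}^3$. *)

(* Defs.v *)
From Stdlib Require Import Reals Lra Lia.
From Coquelicot Require Import Coquelicot.
Open Scope R_scope.

Fixpoint an (a b : R) (n : nat) : R :=
  match n with
  | O => a
  | S k => an a b k + (b - a) / 2 ^ (S k)
  end.

Definition psi (a b : R) (n : nat) (x : R) : R :=
  2 ^ n * ((an a b 1 - an a b 0) * x + an a b 0 * an a b n
           - an a b 1 * an a b (n - 1)) / (b - a).

Definition Fk (a b : R) (phi : R -> R -> R) (n : nat) (x y : R) : R :=
  match n with
  | O | S O => phi x y
  | _ => / INR n * phi (psi a b n x) y + (INR n - 1) / INR n * phi (an a b 0) y
  end.

(* piece k x y = F_j(x,y) for x in [a_{j-1}, a_j], j = 1 .. k+1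
   (the pieces agree at the common endpoints). *)
Fixpoint piece (a b : R) (phi : R -> R -> R) (k : nat) (x y : R) : R :=
  match k with
  | O => Fk a b phi 1 x y
  | S j => if Rle_dec x (an a b (S j)) then piece a b phi j x y
           else Fk a b phi (S (S j)) x y
  end.

(* T_n (n >= 1): F_k on [a_{k-1},a_k] (k = 1..n), and F_n(a_n, y) on [a_n, b].
   (T_0 is irrelevant for the limit; it is given the same formula as T_1.) *)
Definition Tn (a b : R) (phi : R -> R -> R) (n : nat) (x y : R) : R :=
  let m := Nat.max n 1 in
  if Rle_dec x (an a b m) then piece a b phi (m - 1) x y
  else Fk a b phi m (an a b m) y.

Definition Tlim (a b : R) (phi : R -> R -> R) (x y : R) : R :=
  real (Lim_seq (fun n => Tn a b phi n x y)).

Definition graphT (a b c d : R) (phi : R -> R -> R) : R * R * R -> Prop :=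
  fun p => let '(x, y, z) := p in
    a <= x <= b /\ c <= y <= d /\ z = Tlim a b phi x y.

Definition continuous_on_rect (phi : R -> R -> R) (x1 x2 y1 y2 : R) : Prop :=
  forall x y, x1 <= x <= x2 -> y1 <= y <= y2 ->
  forall eps, 0 < eps -> exists delta, 0 < delta /\
    forall x' y', x1 <= x' <= x2 -> y1 <= y' <= y2 ->
      Rabs (x' - x) < delta -> Rabs (y' - y) < delta ->
      Rabs (phi x' y' - phi x y) < eps.

Fixpoint arz_sum (phi : R -> R -> R) (xs ys : nat -> R) (m : nat) : R :=
  match m with
  | O => 0
  | S k => arz_sum phi xs ys k + Rabs (phi (xs (S k)) (ys (S k)) - phi (xs k) (ys k))
  end.

Definition arzela_BV (phi : R -> R -> R) (x1 x2 y1 y2 : R) : Prop :=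
  exists K, forall (m : nat) (xs ys : nat -> R),
    xs 0%nat = x1 -> xs m = x2 -> ys 0%nat = y1 -> ys m = y2 ->
    (forall i, (i < m)%nat -> xs i <= xs (S i)) ->
    (forall i, (i < m)%nat -> ys i <= ys (S i)) ->
    arz_sum phi xs ys m <= K.

Definition dist3 (p q : R * R * R) : R :=
  let '(x1, y1, z1) := p in let '(x2, y2, z2) := q in
  sqrt ((x1 - x2) ^ 2 + (y1 - y2) ^ 2 + (z1 - z2) ^ 2).

Definition covers (F : R * R * R -> Prop) (delta : R) (n : nat) : Prop :=
  exists U : nat -> (R * R * R -> Prop),
    (forall i, (i < n)%nat -> forall p q, U i p -> U i q -> dist3 p q <= delta) /\
    (forall p, F p -> exists i, (i < n)%nat /\ U i p).

Definition cover_number (F : R * R * R -> Prop) (delta : R) (n : nat) : Prop :=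
  covers F delta n /\ forall m, covers F delta m -> (n <= m)%nat.

Definition box_dim_eq (F : R * R * R -> Prop) (s : R) : Prop :=
  (forall delta, 0 < delta -> exists n, covers F delta n) /\
  forall eps, 0 < eps -> exists delta0, 0 < delta0 /\
    forall delta n, 0 < delta < delta0 -> cover_number F delta n ->
      Rabs (ln (INR n) / (- ln delta) - s) < eps.

(* Main.v *)
Require Import Defs.
From Stdlib Require Import Reals.
From Coquelicot Require Import Coquelicot.
From Stdlib Require Import Lra Lia ZArith Classical ClassicalEpsilon.
Open Scope R_scope.

Lemma an_closed a b n : an a b n = b - (b - a) / 2 ^ n.
Proof.
  induction n as [|k IH]; simpl.
  - field.
  - rewrite IH. assert (2 ^ k <> 0) by (apply pow_nonzero; lra). field; auto.
Qed.

Lemma an_0 a b : an a b 0 = a. Proof. reflexivity. Qed.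
Lemma an_1 a b : an a b 1 = a + (b - a) / 2. Proof. simpl. field. Qed.

Lemma an_S_ge a b n : a < b -> an a b n <= an a b (S n).
Proof. intros. simpl. assert (0 < 2 ^ S n) by (apply pow_lt; lra).
  assert (0 <= (b-a)/2^S n) by (apply Rdiv_le_0_compat; lra). simpl in *; lra. Qed.

Lemma an_mono a b n m : a < b -> (n <= m)%nat -> an a b n <= an a b m.
Proof. intros H Hnm. induction Hnm. lra. eapply Rle_trans. eauto. apply an_S_ge; auto. Qed.

Lemma an_le_b a b n : a < b -> an a b n <= b.
Proof. intros. rewrite an_closed. assert (0 < 2 ^ n) by (apply pow_lt; lra).
  assert (0 <= (b-a)/2^n) by (apply Rdiv_le_0_compat; lra). lra. Qed.

Lemma an_ge_a a b n : a < b -> a <= an a b n.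
Proof. intros. change a with (an a b 0) at 1. apply an_mono; auto; lia. Qed.

Lemma psi_right a b n : a < b -> (1 <= n)%nat -> psi a b n (an a b n) = an a b 1.
Proof. intros H Hn. destruct n as [|k]; [lia|]. unfold psi.
  rewrite !an_closed. replace (S k - 1)%nat with k by lia.
  assert (2 ^ k <> 0) by (apply pow_nonzero; lra). simpl. field. split; auto; lra. Qed.

Lemma psi_left a b n : a < b -> (1 <= n)%nat -> psi a b n (an a b (n-1)) = an a b 0.
Proof. intros H Hn. destruct n as [|k]; [lia|]. unfold psi.
  rewrite !an_closed. replace (S k - 1)%nat with k by lia.
  assert (2 ^ k <> 0) by (apply pow_nonzero; lra). simpl. field. split; auto; lra. Qed.

Lemma psi_mono a b n x y : a < b -> x <= y -> psi a b n x <= psi a b n y.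
Proof. intros H Hxy. unfold psi. rewrite an_1, an_0.
  assert (0 < 2 ^ n) by (apply pow_lt; lra). unfold Rdiv.
  apply Rmult_le_compat_r. apply Rlt_le, Rinv_0_lt_compat; lra.
  apply Rmult_le_compat_l. lra.
  assert (0 <= (a + (b-a)/2 - a)) by lra.
  assert ((a + (b - a) / 2 - a) * x <= (a + (b - a) / 2 - a) * y) by (apply Rmult_le_compat_l; lra).
  lra. Qed.

Section S.
Variables (a b c d : R) (phi : R -> R -> R).
Hypothesis Hab : a < b.
Hypothesis Hper : forall y, c <= y <= d -> phi (an a b 0) y = phi (an a b 1) y.

Lemma INR_ne0 n : (1 <= n)%nat -> INR n <> 0.
Proof. intros. apply not_0_INR. lia. Qed.

Lemma Fk_right n y : c <= y <= d -> (1 <= n)%nat -> Fk a b phi n (an a b n) y = phi (an a b 0) y.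
Proof. intros Hy Hn. destruct n as [|[|k]]; [lia| |].
  - simpl Fk. rewrite Hper; auto.
  - unfold Fk. rewrite psi_right by (auto; lia). rewrite <- Hper by auto.
    assert (INR (S (S k)) <> 0) by (apply INR_ne0; lia). field; auto.
Qed.

Lemma Fk_left n y : c <= y <= d -> (1 <= n)%nat -> Fk a b phi n (an a b (n-1)%nat) y = phi (an a b 0) y.
Proof. intros Hy Hn. destruct n as [|[|k]]; [lia| |].
  - simpl Fk. reflexivity.
  - unfold Fk. rewrite psi_left by (auto; lia).
    assert (INR (S (S k)) <> 0) by (apply INR_ne0; lia). field; auto.
Qed.

Lemma piece_val k n x y : c <= y <= d -> (1 <= n <= S k)%nat ->
  an a b (n-1)%nat <= x <= an a b n -> piece a b phi k x y = Fk a b phi n x y.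
Proof.
  revert n. induction k as [|j IH]; intros n Hy Hn Hx.
  - assert (n = 1%nat) by lia. subst. reflexivity.
  - change (piece a b phi (S j) x y) with (if Rle_dec x (an a b (S j)) then piece a b phi j x y else Fk a b phi (S (S j)) x y).
    destruct (Rle_dec x (an a b (S j))) as [H1|H1].
    + destruct (Nat.eq_dec n (S (S j))) as [E|E].
      * subst n. replace (S (S j) - 1)%nat with (S j) in Hx by lia.
        assert (x = an a b (S j)) by lra. subst x.
        rewrite (IH (S j)); auto; [|lia|].
        -- rewrite Fk_right by (auto; lia).
           pose proof (Fk_left (S (S j)) y Hy) as HL. replace (S (S j) - 1)%nat with (S j) in HL by lia.
           rewrite HL by lia. reflexivity.
        -- replace (S j - 1)%nat with j by lia. split; [apply an_S_ge|]; lra.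
      * apply IH; auto; lia.
    + destruct (Nat.eq_dec n (S (S j))) as [E|E].
      * subst; reflexivity.
      * exfalso. assert (an a b n <= an a b (S j)) by (apply an_mono; auto; lia). lra.
Qed.

Lemma Tn_val m n x y : c <= y <= d -> (1 <= n <= m)%nat ->
  an a b (n-1)%nat <= x <= an a b n -> Defs.Tn a b phi m x y = Fk a b phi n x y.
Proof. intros Hy Hn Hx. unfold Defs.Tn. replace (Nat.max m 1) with m by lia.
  destruct (Rle_dec x (an a b m)) as [H|H].
  - apply piece_val; auto; lia.
  - exfalso. assert (an a b n <= an a b m) by (apply an_mono; auto; lia). lra.
Qed.

Lemma T_val n x y : c <= y <= d -> (1 <= n)%nat ->
  an a b (n-1)%nat <= x <= an a b n -> Tlim a b phi x y = Fk a b phi n x y.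
Proof. intros Hy Hn Hx. unfold Tlim.
  rewrite (Lim_seq_ext_loc _ (fun _ => Fk a b phi n x y)).
  - rewrite Lim_seq_const. reflexivity.
  - exists n. intros m Hm. apply Tn_val; auto.
Qed.

Variable B : R.
Hypothesis HB : forall x y, an a b 0 <= x <= an a b 1 -> c <= y <= d -> Rabs (phi x y) <= B.

Lemma psi_in n x : (1 <= n)%nat -> an a b (n-1)%nat <= x <= an a b n ->
  an a b 0 <= psi a b n x <= an a b 1.
Proof. intros Hn [H1 H2]. split.
  - rewrite <- (psi_left a b n) by auto. apply psi_mono; auto.
  - rewrite <- (psi_right a b n) by auto. apply psi_mono; auto. Qed.

Lemma Fk_bound n x y : c <= y <= d -> (1 <= n)%nat -> an a b (n-1)%nat <= x <= an a b n ->
  Rabs (Fk a b phi n x y) <= B.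
Proof. intros Hy Hn Hx. destruct n as [|[|k]]; [lia| |].
  - simpl Fk. apply HB; auto. simpl in Hx. auto.
  - unfold Fk. pose proof (psi_in (S (S k)) x ltac:(lia) Hx).
    pose proof (HB _ y H Hy). assert (Ha0: an a b 0 <= an a b 0 <= an a b 1) by (split; [lra| apply an_S_ge; auto]).
    pose proof (HB _ y Ha0 Hy).
    assert (HN: 1 < INR (S (S k))) by (rewrite !S_INR; pose proof (pos_INR k); lra).
    eapply Rle_trans. apply Rabs_triang.
    rewrite !Rabs_mult. rewrite Rabs_inv. unfold Rdiv. rewrite Rabs_mult, Rabs_inv.
    rewrite !(Rabs_right (INR _)) by lra. rewrite (Rabs_right (INR _ - 1)) by lra.
    set (N := INR (S (S k))) in *.
    assert (/N * Rabs (phi (psi a b (S (S k)) x) y) <= /N * B).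
    { apply Rmult_le_compat_l; auto. apply Rlt_le, Rinv_0_lt_compat; lra. }
    assert ((N-1) * /N * Rabs (phi (an a b 0) y) <= (N-1) * /N * B).
    { apply Rmult_le_compat_l; auto. apply Rmult_le_pos. lra. apply Rlt_le, Rinv_0_lt_compat; lra. }
    replace B with (/N * B + (N-1) * /N * B) by (field; lra). lra.
Qed.

Lemma piece_bound k x y : c <= y <= d -> a <= x <= an a b (S k) -> Rabs (piece a b phi k x y) <= B.
Proof. induction k as [|j IH]; intros Hy Hx.
  - simpl piece. simpl Fk. apply HB; auto.
  - change (piece a b phi (S j) x y) with (if Rle_dec x (an a b (S j)) then piece a b phi j x y else Fk a b phi (S (S j)) x y).
    destruct (Rle_dec x (an a b (S j))).
    + apply IH; auto; lra.
    + apply Fk_bound; auto. lia. replace (S (S j) - 1)%nat with (S j) by lia. lra.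
Qed.

Lemma Tn_bound m x y : c <= y <= d -> a <= x -> Rabs (Defs.Tn a b phi m x y) <= B.
Proof. intros Hy Hx. unfold Defs.Tn. destruct (Rle_dec x (an a b (Nat.max m 1))).
  - apply piece_bound; auto. replace (S (Nat.max m 1 - 1)) with (Nat.max m 1) by lia. lra.
  - rewrite Fk_right by (auto; lia). apply HB; auto. split; [lra|apply an_S_ge; auto].
Qed.

Lemma T_bound x y : c <= y <= d -> a <= x -> Rabs (Tlim a b phi x y) <= B.
Proof. intros Hy Hx. unfold Tlim.
  assert (H1: Rbar_le (Lim_seq (fun n => Defs.Tn a b phi n x y)) (Lim_seq (fun _ => B))).
  { apply Lim_seq_le_loc. exists 0%nat. intros n _. pose proof (Tn_bound n x y Hy Hx). apply Rabs_le_between in H. lra. }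
  assert (H2: Rbar_le (Lim_seq (fun _ => -B)) (Lim_seq (fun n => Defs.Tn a b phi n x y))).
  { apply Lim_seq_le_loc. exists 0%nat. intros n _. pose proof (Tn_bound n x y Hy Hx). apply Rabs_le_between in H. lra. }
  rewrite Lim_seq_const in H1, H2.
  assert (0 <= B). { pose proof (Tn_bound 0 x y Hy Hx). pose proof (Rabs_pos (Defs.Tn a b phi 0 x y)). lra. }
  destruct (Lim_seq (fun n => Defs.Tn a b phi n x y)) as [l| |]; simpl in *; try contradiction;
  try (apply Rabs_le; lra); rewrite Rabs_R0; auto.
Qed.
End S.

Fixpoint nsum (f : nat -> nat) (r : nat) : nat :=
  match r with O => O | S k => (nsum f k + f k)%nat end.
Fixpoint rsum (f : nat -> R) (r : nat) : R :=
  match r with O => 0 | S k => rsum f k + f k end.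

Lemma INR_nsum f r : INR (nsum f r) = rsum (fun k => INR (f k)) r.
Proof. induction r; simpl; auto. rewrite plus_INR, IHr. auto. Qed.

Lemma rsum_le f g r : (forall k, (k < r)%nat -> f k <= g k) -> rsum f r <= rsum g r.
Proof. induction r; intros H; simpl. lra. assert (f r <= g r) by (apply H; lia).
  assert (rsum f r <= rsum g r) by (apply IHr; intros; apply H; lia). lra. Qed.

Lemma rsum_const c r : rsum (fun _ => c) r = INR r * c.
Proof. induction r; simpl rsum. simpl; lra. rewrite IHr, S_INR. lra. Qed.

Lemma rsum_plus f g r : rsum (fun k => f k + g k) r = rsum f r + rsum g r.
Proof. induction r; simpl; [lra|]. rewrite IHr. lra. Qed.

Lemma rsum_scal c f r : rsum (fun k => c * f k) r = c * rsum f r.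
Proof. induction r; simpl; [lra|]. rewrite IHr. lra. Qed.

Lemma rsum_nonneg f r : (forall k, (k < r)%nat -> 0 <= f k) -> 0 <= rsum f r.
Proof. intros H. replace 0 with (rsum (fun _ => 0) r). apply rsum_le; auto.
  rewrite rsum_const. lra. Qed.

Lemma cov_mono (A B : R*R*R -> Prop) del n : covers A del n -> (forall p, B p -> A p) -> covers B del n.
Proof. intros [U [H1 H2]] HBA. exists U. split; auto. Qed.

Lemma cov_empty (A : R*R*R -> Prop) del : (forall p, ~ A p) -> covers A del 0.
Proof. intros H. exists (fun _ _ => False). split. intros; contradiction.
  intros p Hp. exfalso. eapply H; eauto. Qed.

Lemma cov_union2 (A B : R*R*R -> Prop) del n1 n2 : covers A del n1 -> covers B del n2 ->
  covers (fun p => A p \/ B p) del (n1 + n2).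
Proof. intros [U1 [H1 H1']] [U2 [H2 H2']].
  exists (fun i => if Nat.ltb i n1 then U1 i else U2 (i - n1)%nat). split.
  - intros i Hi p q. destruct (Nat.ltb_spec i n1).
    + apply H1; auto.
    + apply H2. lia.
  - intros p [Hp|Hp].
    + destruct (H1' p Hp) as [i [Hi Hu]]. exists i. split. lia.
      destruct (Nat.ltb_spec i n1); [auto|lia].
    + destruct (H2' p Hp) as [i [Hi Hu]]. exists (i + n1)%nat. split. lia.
      destruct (Nat.ltb_spec (i+n1) n1); [lia|]. replace (i + n1 - n1)%nat with i by lia. auto.
Qed.

Lemma cov_big (F : nat -> R*R*R -> Prop) (g : nat -> nat) del r :
  (forall k, (k < r)%nat -> covers (F k) del (g k)) ->
  covers (fun p => exists k, (k < r)%nat /\ F k p) del (nsum g r).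
Proof. induction r as [|r IH]; intros H.
  - apply cov_empty. intros p [k [Hk _]]. lia.
  - simpl. eapply cov_mono. apply cov_union2. apply IH. intros; apply H; lia. apply (H r). lia.
    intros p [k [Hk Hp]]. destruct (Nat.eq_dec k r). subst; right; auto. left. exists k. split; auto. lia.
Qed.

Lemma grid_find n h t : 0 < h -> (1 <= n)%nat -> 0 <= t <= INR n * h ->
  exists k, (k < n)%nat /\ INR k * h <= t <= INR (S k) * h.
Proof. intros Hh. induction n as [|n IH]; intros Hn Ht. lia.
  destruct (Rle_dec t (INR n * h)) as [H|H].
  - destruct n as [|n]. simpl in H. exists 0%nat. split. lia. simpl. lra.
    destruct (IH ltac:(lia) ltac:(lra)) as [k [Hk Hk']]. exists k. split; [lia|auto].
  - exists n. split. lia. lra.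
Qed.

Lemma ceil_exists h t : 0 < h -> 0 <= t -> exists n : nat, t <= INR n * h <= t + h.
Proof. intros Hh Ht. destruct (archimed (t / h)) as [H1 H2].
  assert (0 <= t / h) by (apply Rdiv_le_0_compat; lra).
  assert (Hz: (0 <= up (t/h))%Z). { apply le_IZR. lra. }
  exists (Z.to_nat (up (t/h))). rewrite INR_IZR_INZ, Z2Nat.id by auto.
  assert (t = (t/h) * h) by (field; lra). split; nra.
Qed.

Lemma pigeon n : forall P (Rl : nat -> nat -> Prop),
  (forall q, (q < P)%nat -> exists k, (k < n)%nat /\ Rl q k) ->
  (forall q q' k, (q < P)%nat -> (q' < P)%nat -> Rl q k -> Rl q' k -> q = q') -> (P <= n)%nat.
Proof. induction n as [|n IH]; intros P Rl H1 H2.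
  - destruct P. lia. destruct (H1 0%nat ltac:(lia)) as [k [Hk _]]. lia.
  - destruct (classic (exists q0, (q0 < P)%nat /\ Rl q0 n)) as [[q0 [Hq0 Rq0]]|Hno].
    + set (sh := fun q => if Nat.ltb q q0 then q else S q).
      assert (Hsh: forall q, (q < P - 1)%nat -> (sh q < P)%nat /\ sh q <> q0).
      { intros q Hq. unfold sh. destruct (Nat.ltb_spec q q0); lia. }
      assert (Hinj: forall q q', sh q = sh q' -> q = q').
      { intros q q'. unfold sh. destruct (Nat.ltb_spec q q0), (Nat.ltb_spec q' q0); lia. }
      assert (P - 1 <= n)%nat.
      { apply (IH (P - 1)%nat (fun q k => Rl (sh q) k /\ (k < n)%nat)).
        - intros q Hq. destruct (Hsh q Hq) as [Hs Hs']. destruct (H1 _ Hs) as [k [Hk Rk]].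
          exists k. destruct (Nat.eq_dec k n). subst k. exfalso. apply Hs'.
          eapply H2; eauto. split; [lia|split; auto; lia].
        - intros q q' k Hq Hq' [R1 _] [R2 _]. apply Hinj. eapply H2; eauto; apply Hsh; auto. }
      lia.
    + assert (P <= n)%nat.
      { apply (IH P (fun q k => Rl q k /\ (k < n)%nat)).
        - intros q Hq. destruct (H1 _ Hq) as [k [Hk Rk]]. exists k.
          destruct (Nat.eq_dec k n). subst. exfalso. apply Hno. eauto. split; [lia|split; auto; lia].
        - intros q q' k Hq Hq' [R1 _] [R2 _]. eapply H2; eauto. }
      lia.
Qed.

Lemma sq_le_h u h : 0 < h -> Rabs u <= h -> u ^ 2 <= h ^ 2.
Proof. intros Hh Hu. apply Rabs_le_between in Hu. nra. Qed.

Lemma dist3_le x1 y1 z1 x2 y2 z2 h : 0 < h -> Rabs (x1 - x2) <= h -> Rabs (y1 - y2) <= h ->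
  Rabs (z1 - z2) <= h -> dist3 (x1, y1, z1) (x2, y2, z2) <= sqrt 3 * h.
Proof. intros Hh H1 H2 H3. unfold dist3.
  apply sq_le_h in H1; apply sq_le_h in H2; apply sq_le_h in H3; auto.
  replace (sqrt 3 * h) with (sqrt (3 * h ^ 2)).
  - apply sqrt_le_1_alt. lra.
  - rewrite sqrt_mult by nra. rewrite sqrt_pow2 by lra. auto.
Qed.

Lemma slab_cover x0 y0 w v h zc N : 0 < h -> 0 <= w <= h -> 0 <= v <= h ->
  covers (fun p => let '(x, y, z) := p in x0 <= x <= x0 + w /\ y0 <= y <= y0 + v /\
     zc - INR N * h <= z <= zc + INR N * h) (sqrt 3 * h) (2 * N + 1).
Proof. intros Hh Hw Hv.
  exists (fun k p => let '(x, y, z) := p in x0 <= x <= x0 + w /\ y0 <= y <= y0 + v /\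
     zc - INR N * h + INR k * h <= z <= zc - INR N * h + INR (S k) * h). split.
  - intros i Hi [[x1 y1] z1] [[x2 y2] z2] [Hx1 [Hy1 Hz1]] [Hx2 [Hy2 Hz2]].
    rewrite S_INR in *. apply dist3_le; auto; apply Rabs_le; lra.
  - intros [[x y] z] [Hx [Hy Hz]].
    destruct (grid_find (2 * N + 1) h (z - (zc - INR N * h)) Hh ltac:(lia)) as [k [Hk Hk']].
    { rewrite plus_INR, mult_INR. simpl INR. lra. }
    exists k. split; auto. split; auto. split; auto. lra.
Qed.

Definition zs (P Q : nat -> R) (e0 e1 : R) (r n : nat) : R :=
  match n with
  | O => e0
  | S n' => if Nat.ltb n' (2 * r) then
              (if Nat.eqb (2 * Nat.div2 n') n' then P (Nat.div2 n') else Q (Nat.div2 n'))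
            else e1
  end.

Lemma zs_odd P Q e0 e1 r k : zs P Q e0 e1 r (S (2 * k)) = if Nat.ltb k r then P k else e1.
Proof. unfold zs. rewrite Nat.div2_double. rewrite Nat.eqb_refl.
  destruct (Nat.ltb_spec (2*k) (2*r)), (Nat.ltb_spec k r); auto; lia. Qed.

Lemma zs_even P Q e0 e1 r k : (k < r)%nat -> zs P Q e0 e1 r (S (S (2 * k))) = Q k.
Proof. intros Hk. unfold zs. rewrite Nat.div2_succ_double.
  destruct (Nat.ltb_spec (S (2*k)) (2*r)); [|lia].
  destruct (Nat.eqb_spec (2 * k) (S (2*k))); [lia|auto]. Qed.

Lemma zs_mono P Q e0 e1 r : e0 <= e1 -> ((0 < r)%nat -> e0 <= P 0%nat) ->
  (forall k, (k < r)%nat -> P k <= Q k /\ Q k <= e1) ->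
  (forall k, (S k < r)%nat -> Q k <= P (S k)) ->
  forall i, (i < 2 * r + 1)%nat -> zs P Q e0 e1 r i <= zs P Q e0 e1 r (S i).
Proof. intros H0 H1 H2 H3 i Hi. destruct i as [|n'].
  - change (zs P Q e0 e1 r 1) with (zs P Q e0 e1 r (S (2 * 0))). rewrite zs_odd.
    simpl. destruct (Nat.ltb_spec 0 r). apply H1; lia. lra.
  - destruct (Nat.Even_or_Odd n') as [[k Hk]|[k Hk]]; subst n'.
    + rewrite zs_odd. rewrite zs_even by lia. destruct (Nat.ltb_spec k r); [|lia]. apply H2; lia.
    + replace (S (2 * k + 1)) with (S (S (2 * k))) by lia. rewrite zs_even by lia.
      replace (S (S (S (2 * k)))) with (S (2 * S k)) by lia. rewrite zs_odd.
      destruct (Nat.ltb_spec (S k) r). apply H3; auto. apply H2; lia.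
Qed.

Lemma chain_bound (f : R -> R -> R) x1 x2 y1 y2 K
  (HBV : forall (m : nat) (xs ys : nat -> R),
    xs 0%nat = x1 -> xs m = x2 -> ys 0%nat = y1 -> ys m = y2 ->
    (forall i, (i < m)%nat -> xs i <= xs (S i)) ->
    (forall i, (i < m)%nat -> ys i <= ys (S i)) ->
    arz_sum f xs ys m <= K)
  r Px Py Qx Qy :
  x1 <= x2 -> y1 <= y2 -> ((0 < r)%nat -> x1 <= Px 0%nat /\ y1 <= Py 0%nat) ->
  (forall k, (k < r)%nat -> Px k <= Qx k /\ Qx k <= x2 /\ Py k <= Qy k /\ Qy k <= y2) ->
  (forall k, (S k < r)%nat -> Qx k <= Px (S k) /\ Qy k <= Py (S k)) ->
  rsum (fun k => Rabs (f (Qx k) (Qy k) - f (Px k) (Py k))) r <= K.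
Proof. intros Hx Hy H1 H2 H3.
  set (xs := zs Px Qx x1 x2 r). set (ys := zs Py Qy y1 y2 r).
  assert (Hs: forall k, (k <= r)%nat -> rsum (fun k => Rabs (f (Qx k) (Qy k) - f (Px k) (Py k))) k <= arz_sum f xs ys (2 * k)).
  { induction k as [|k IH]; intros Hk. simpl. lra.
    replace (2 * S k)%nat with (S (S (2 * k))) by lia. simpl rsum. cbn [arz_sum].
    unfold xs, ys. rewrite !zs_even by lia. rewrite !zs_odd. destruct (Nat.ltb_spec k r); [|lia].
    fold xs ys. pose proof (IH ltac:(lia)). pose proof (Rabs_pos (f (Px k) (Py k) - f (xs (2 * k)%nat) (ys (2 * k)%nat))). lra. }
  assert (arz_sum f xs ys (2 * r + 1) <= K).
  { apply HBV.
    - reflexivity.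
    - unfold xs. replace (2 * r + 1)%nat with (S (2 * r)) by lia. rewrite zs_odd. destruct (Nat.ltb_spec r r); [lia|auto].
    - reflexivity.
    - unfold ys. replace (2 * r + 1)%nat with (S (2 * r)) by lia. rewrite zs_odd. destruct (Nat.ltb_spec r r); [lia|auto].
    - apply zs_mono; auto. intros; apply H1; auto. intros k Hk; split; apply H2; auto. intros; apply H3; auto.
    - apply zs_mono; auto. intros; apply H1; auto. intros k Hk; split; apply H2; auto. intros; apply H3; auto. }
  replace (2 * r + 1)%nat with (S (2 * r)) in H by lia. cbn [arz_sum] in H.
  pose proof (Hs r ltac:(lia)). pose proof (Rabs_pos (f (xs (S (2 * r))) (ys (S (2 * r))) - f (xs (2 * r)%nat) (ys (2 * r)%nat))). lra.
Qed.

Definition BV (f : R -> R -> R) x1 x2 y1 y2 K := forall (m : nat) (xs ys : nat -> R),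
    xs 0%nat = x1 -> xs m = x2 -> ys 0%nat = y1 -> ys m = y2 ->
    (forall i, (i < m)%nat -> xs i <= xs (S i)) ->
    (forall i, (i < m)%nat -> ys i <= ys (S i)) ->
    arz_sum f xs ys m <= K.

Section Strip.
Variables (f : R -> R -> R) (x1 x2 y1 y2 K h : R) (M L : nat).
Hypothesis HBV : BV f x1 x2 y1 y2 K.
Hypothesis Hx12 : x1 < x2.
Hypothesis Hy12 : y1 < y2.
Hypothesis Hh : 0 < h.
Hypothesis HM : (1 <= M)%nat.
Hypothesis HL : (1 <= L)%nat.
Let w := (x2 - x1) / INR M.
Let v := (y2 - y1) / INR L.
Hypothesis Hw : w <= h.
Hypothesis Hv : v <= h.

Lemma w_pos : 0 < w. Proof. unfold w. apply Rdiv_lt_0_compat. lra. apply lt_0_INR; lia. Qed.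
Lemma w_nn : 0 <= w. Proof. pose proof w_pos. lra. Qed.
Lemma v_pos : 0 < v. Proof. unfold v. apply Rdiv_lt_0_compat. lra. apply lt_0_INR; lia. Qed.
Lemma v_nn : 0 <= v. Proof. pose proof v_pos. lra. Qed.

Let X (i : nat) := x1 + INR i * w.
Let Y (j : nat) := y1 + INR j * v.

Lemma X_mono i i' : (i <= i')%nat -> X i <= X i'.
Proof. intros. unfold X. pose proof w_nn. apply le_INR in H. nra. Qed.
Lemma Y_mono j j' : (j <= j')%nat -> Y j <= Y j'.
Proof. intros. unfold Y. pose proof v_nn. apply le_INR in H. nra. Qed.
Lemma XM : X M = x2. Proof. unfold X, w. field. apply not_0_INR; lia. Qed.
Lemma YL : Y L = y2. Proof. unfold Y, v. field. apply not_0_INR; lia. Qed.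
Lemma X0 : X 0 = x1. Proof. unfold X. simpl. lra. Qed.
Lemma Y0 : Y 0 = y1. Proof. unfold Y. simpl. lra. Qed.
Lemma XS i : X (S i) = X i + w. Proof. unfold X. rewrite S_INR. lra. Qed.
Lemma YS j : Y (S j) = Y j + v. Proof. unfold Y. rewrite S_INR. lra. Qed.

Definition validb (t i : nat) : bool := (Nat.leb M (i + t) && Nat.ltb (i + t - M) L && Nat.ltb i M)%bool.
Lemma validb_spec t i : validb t i = true <-> ((M <= i + t)%nat /\ (i + t - M < L)%nat /\ (i < M)%nat).
Proof. unfold validb. rewrite !Bool.andb_true_iff, Nat.leb_le, !Nat.ltb_lt. tauto. Qed.

Let jj t i := Nat.min L (i + t - M).

Let incell t i (x y : R) := X i <= x <= X (S i) /\ Y (jj t i) <= y <= Y (S (jj t i)).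

Lemma cell_diff t i x y : validb t i = true -> incell t i x y ->
  Rabs (f x y - f (X i) (Y (jj t i))) <= K.
Proof. intros Hv' [Hx Hy]. apply validb_spec in Hv'.
  pose proof (chain_bound f x1 x2 y1 y2 K HBV 1%nat (fun _ => X i) (fun _ => Y (jj t i)) (fun _ => x) (fun _ => y)) as Hc.
  simpl rsum in Hc. rewrite Rplus_0_l in Hc. apply Hc; auto; try lra.
  - intros _. split. rewrite <- X0. apply X_mono; lia. rewrite <- Y0. apply Y_mono; lia.
  - intros k Hk. split. lra. split. rewrite <- XM. eapply Rle_trans. apply Hx. apply X_mono; lia.
    split. lra. rewrite <- YL. eapply Rle_trans. apply Hy. apply Y_mono. unfold jj. lia.
  - intros. lia.
Qed.

Lemma near_max t i : exists q : R * R, validb t i = true ->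
  incell t i (fst q) (snd q) /\
  forall x y, incell t i x y -> Rabs (f x y - f (X i) (Y (jj t i))) <= Rabs (f (fst q) (snd q) - f (X i) (Y (jj t i))) + h.
Proof.
  destruct (Bool.bool_dec (validb t i) true) as [Hv'|Hv'].
  2:{ exists (0,0). intros; contradiction. }
  set (E := fun r => exists x y, incell t i x y /\ r = Rabs (f x y - f (X i) (Y (jj t i)))).
  assert (HE1 : bound E). { exists K. intros r [x [y [Hc ->]]]. apply cell_diff; auto. }
  assert (HE2 : exists r, E r).
  { exists (Rabs (f (X i) (Y (jj t i)) - f (X i) (Y (jj t i)))). exists (X i), (Y (jj t i)). split; auto.
    split. split. lra. rewrite XS. pose proof w_nn. lra. split. lra. rewrite YS. pose proof v_nn. lra. }
  destruct (completeness E HE1 HE2) as [m [Hm1 Hm2]].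
  assert (exists r, E r /\ m - h < r).
  { apply Classical_Prop.NNPP. intros Hn. assert (m <= m - h). apply Hm2. intros r Hr.
    apply Rnot_lt_le. intros Hlt. apply Hn. eauto. lra. }
  destruct H as [r [[x [y [Hc Hr]]] Hlt]]. exists (x, y). intros _. simpl. split; auto.
  intros x' y' Hc'. assert (E (Rabs (f x' y' - f (X i) (Y (jj t i))))) by (exists x', y'; auto).
  apply Hm1 in H. lra.
Qed.

Definition qsel t i : R * R := proj1_sig (constructive_indefinite_description _ (near_max t i)).
Lemma qsel_spec t i : validb t i = true ->
  incell t i (fst (qsel t i)) (snd (qsel t i)) /\
  forall x y, incell t i x y -> Rabs (f x y - f (X i) (Y (jj t i))) <=
     Rabs (f (fst (qsel t i)) (snd (qsel t i)) - f (X i) (Y (jj t i))) + h.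
Proof. unfold qsel. destruct (constructive_indefinite_description _ (near_max t i)). simpl. auto. Qed.

Let dlt t i := Rabs (f (fst (qsel t i)) (snd (qsel t i)) - f (X i) (Y (jj t i))).

Lemma nsel_ex t i : exists n : nat, dlt t i + h <= INR n * h <= dlt t i + h + h.
Proof. apply ceil_exists; auto. pose proof (Rabs_pos (f (fst (qsel t i)) (snd (qsel t i)) - f (X i) (Y (jj t i)))). unfold dlt. lra. Qed.
Definition nsel t i : nat := proj1_sig (constructive_indefinite_description _ (nsel_ex t i)).
Lemma nsel_spec t i : dlt t i + h <= INR (nsel t i) * h <= dlt t i + h + h.
Proof. unfold nsel. destruct (constructive_indefinite_description _ (nsel_ex t i)). simpl. auto. Qed.

Definition cnt t i : nat := if validb t i then (2 * nsel t i + 1)%nat else 0%nat.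

Definition cellset t i (p : R * R * R) : Prop := let '(x, y, z) := p in
  validb t i = true /\ incell t i x y /\
  f (X i) (Y (jj t i)) - INR (nsel t i) * h <= z <= f (X i) (Y (jj t i)) + INR (nsel t i) * h.

Lemma cellset_cover t i : covers (cellset t i) (sqrt 3 * h) (cnt t i).
Proof. unfold cnt. destruct (validb t i) eqn:E.
  - eapply cov_mono. apply (slab_cover (X i) (Y (jj t i)) w v h (f (X i) (Y (jj t i))) (nsel t i)); auto.
    split; [apply w_nn|auto]. split; [apply v_nn|auto].
    intros [[x y] z] Hc. unfold cellset in Hc. destruct Hc as [_ [[Hx Hy] Hz]]. rewrite XS in Hx. rewrite YS in Hy. auto.
  - apply cov_empty. intros [[x y] z] Hc. unfold cellset in Hc. destruct Hc as [H _]. rewrite E in H. discriminate.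
Qed.

Definition graph_rect (p : R * R * R) : Prop := let '(x, y, z) := p in
  x1 <= x <= x2 /\ y1 <= y <= y2 /\ z = f x y.

Lemma graph_in_cells p : graph_rect p ->
  exists t, (t < M + L)%nat /\ exists i, (i < M)%nat /\ cellset t i p.
Proof. destruct p as [[x y] z]. intros [Hx [Hy Hz]].
  assert (HMw : INR M * w = x2 - x1) by (unfold w; field; apply not_0_INR; lia).
  assert (HLv : INR L * v = y2 - y1) by (unfold v; field; apply not_0_INR; lia).
  destruct (grid_find M w (x - x1) w_pos HM ltac:(lra)) as [i [Hi Hi']].
  destruct (grid_find L v (y - y1) v_pos HL ltac:(lra)) as [j [Hj Hj']].
  exists (j + M - i)%nat. split. lia. exists i. split. auto.
  assert (Hjj : jj (j + M - i)%nat i = j) by (unfold jj; lia).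
  assert (Hval : validb (j + M - i) i = true) by (apply validb_spec; lia).
  assert (Hc : incell (j + M - i) i x y).
  { unfold incell. rewrite Hjj. unfold X, Y. lra. }
  simpl. split; auto. split; auto.
  destruct (qsel_spec (j + M - i) i Hval) as [_ Hq]. pose proof (Hq x y Hc).
  pose proof (nsel_spec (j + M - i) i). unfold dlt in H0. subst z.
  apply Rabs_le_between in H. lra.
Qed.

Lemma strip_cover : exists n, covers graph_rect (sqrt 3 * h) n /\ INR n <= INR (M + L) * (2 * K / h + 5 * INR M).
Proof.
  exists (nsum (fun t => nsum (fun i => cnt t i) M) (M + L)). split.
  - eapply cov_mono. apply cov_big. intros t Ht. apply cov_big. intros i Hi. apply cellset_cover.
    intros p Hp. apply graph_in_cells in Hp. destruct Hp as [t [Ht [i [Hi Hc]]]]. exists t. split; auto. exists i. auto.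
  - rewrite INR_nsum. rewrite <- rsum_const. apply rsum_le. intros t Ht.
    rewrite INR_nsum.
    set (Px := fun i => X i). set (Py := fun i => Y (jj t i)).
    set (Qx := fun i => if validb t i then fst (qsel t i) else X i).
    set (Qy := fun i => if validb t i then snd (qsel t i) else Y (jj t i)).
    assert (Hch : rsum (fun k => Rabs (f (Qx k) (Qy k) - f (Px k) (Py k))) M <= K).
    { apply chain_bound with x1 x2 y1 y2; auto; try lra.
      - intros _. unfold Px, Py. split. rewrite <- X0. apply X_mono; lia. rewrite <- Y0. apply Y_mono; lia.
      - intros k Hk. unfold Px, Py, Qx, Qy. destruct (validb t k) eqn:E.
        + destruct (qsel_spec t k E) as [[Hx Hy] _]. apply validb_spec in E.
          split. lra. split. rewrite <- XM. eapply Rle_trans. apply Hx. apply X_mono; lia.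
          split. lra. rewrite <- YL. eapply Rle_trans. apply Hy. apply Y_mono. unfold jj. lia.
        + split. lra. split. rewrite <- XM. apply X_mono; lia. split. lra. rewrite <- YL. apply Y_mono. unfold jj. lia.
      - intros k Hk. unfold Px, Py, Qx, Qy. destruct (validb t k) eqn:E.
        + destruct (qsel_spec t k E) as [[Hx Hy] _]. apply validb_spec in E.
          split. lra. eapply Rle_trans. apply Hy. apply Y_mono. unfold jj. lia.
        + split. apply X_mono; lia. apply Y_mono. unfold jj. lia. }
    assert (Hpt : forall k, (k < M)%nat -> INR (cnt t k) <= 2 / h * Rabs (f (Qx k) (Qy k) - f (Px k) (Py k)) + 5).
    { intros k Hk. unfold cnt, Qx, Qy, Px, Py. destruct (validb t k) eqn:E.
      - pose proof (nsel_spec t k). unfold dlt in H.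
        rewrite plus_INR, mult_INR. simpl (INR 2). simpl (INR 1).
        set (D := Rabs _) in *. assert (INR (nsel t k) <= D / h + 2).
        { apply Rmult_le_reg_r with h; auto. replace ((D/h + 2) * h) with (D + h + h) by (field; lra). lra. }
        replace (2 / h * D) with (2 * (D / h)) by (field; lra). lra.
      - simpl. pose proof (Rabs_pos (f (X k) (Y (jj t k)) - f (X k) (Y (jj t k)))).
        assert (0 <= 2 / h) by (apply Rdiv_le_0_compat; lra). nra. }
    eapply Rle_trans. apply rsum_le. apply Hpt.
    rewrite rsum_plus, rsum_scal, rsum_const.
    assert (2 / h * rsum (fun k => Rabs (f (Qx k) (Qy k) - f (Px k) (Py k))) M <= 2 / h * K).
    { apply Rmult_le_compat_l; auto. apply Rdiv_le_0_compat; lra. }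
    replace (2 * K / h) with (2 / h * K) by (field; lra). lra.
Qed.

End Strip.

Lemma arz_lin (g1 g2 : R -> R -> R) al be xs ys m : 0 <= al -> 0 <= be ->
  arz_sum (fun x y => al * g1 x y + be * g2 x y) xs ys m <= al * arz_sum g1 xs ys m + be * arz_sum g2 xs ys m.
Proof. intros H1 H2. induction m; simpl. lra.
  set (d1 := g1 (xs (S m)) (ys (S m)) - g1 (xs m) (ys m)).
  set (d2 := g2 (xs (S m)) (ys (S m)) - g2 (xs m) (ys m)).
  replace (al * g1 (xs (S m)) (ys (S m)) + be * g2 (xs (S m)) (ys (S m)) - (al * g1 (xs m) (ys m) + be * g2 (xs m) (ys m)))
    with (al * d1 + be * d2) by (unfold d1, d2; ring).
  assert (Rabs (al * d1 + be * d2) <= al * Rabs d1 + be * Rabs d2).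
  { eapply Rle_trans. apply Rabs_triang. rewrite !Rabs_mult, (Rabs_right al), (Rabs_right be) by lra. lra. }
  lra.
Qed.

Lemma arz_ext g xs ys xs' ys' m : (forall i, (i <= m)%nat -> xs i = xs' i /\ ys i = ys' i) ->
  arz_sum g xs ys m = arz_sum g xs' ys' m.
Proof. induction m; intros H; simpl. auto.
  rewrite IHm by (intros; apply H; lia).
  destruct (H (S m) ltac:(lia)) as [-> ->]. destruct (H m ltac:(lia)) as [-> ->]. auto. Qed.

Lemma arz_comp (g : R -> R -> R) (p : R -> R) xs ys m :
  arz_sum (fun x y => g (p x) y) xs ys m = arz_sum g (fun i => p (xs i)) ys m.
Proof. induction m; simpl; auto. rewrite IHm. auto. Qed.

Lemma arz_nonneg g xs ys m : 0 <= arz_sum g xs ys m.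
Proof. induction m; simpl. lra. pose proof (Rabs_pos (g (xs (S m)) (ys (S m)) - g (xs m) (ys m))). lra. Qed.

Section BVF.
Variables (a b c d K : R) (phi : R -> R -> R).
Hypothesis Hab : a < b.
Hypothesis Hcd : c < d.
Hypothesis HBV : BV phi (an a b 0) (an a b 1) c d K.

Lemma K_nonneg : 0 <= K.
Proof. pose proof (HBV 1%nat (fun i => if Nat.eqb i 0 then an a b 0 else an a b 1) (fun i => if Nat.eqb i 0 then c else d)).
  eapply Rle_trans. apply arz_nonneg. apply H; auto.
  - intros i Hi. assert (i = 0%nat) by lia. subst. pose proof (an_S_ge a b 0 Hab). simpl in *. lra.
  - intros i Hi. assert (i = 0%nat) by lia. subst. simpl. lra.
Qed.

Lemma BV_const m xs ys : ys 0%nat = c -> ys m = d -> (forall i, (i < m)%nat -> ys i <= ys (S i)) ->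
  arz_sum (fun x y => phi (an a b 0) y) xs ys m <= K.
Proof. intros Hy0 Hym Hymono.
  set (xs' := fun i => if Nat.leb i m then an a b 0 else an a b 1).
  set (ys' := fun i => if Nat.leb i m then ys i else d).
  assert (arz_sum phi xs' ys' (S m) <= K).
  { apply HBV.
    - unfold xs'. simpl. auto.
    - unfold xs'. destruct (Nat.leb_spec (S m) m); [lia|auto].
    - unfold ys'. simpl. auto.
    - unfold ys'. destruct (Nat.leb_spec (S m) m); [lia|auto].
    - intros i Hi. unfold xs'. destruct (Nat.leb_spec i m), (Nat.leb_spec (S i) m); try lra; try lia.
      apply an_S_ge; auto.
    - intros i Hi. unfold ys'. destruct (Nat.leb_spec i m), (Nat.leb_spec (S i) m); try lia.
      apply Hymono; lia. assert (i = m) by lia. subst. lra. }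
  simpl in H. rewrite (arz_ext phi xs' ys' (fun _ => an a b 0) ys m) in H.
  - pose proof (Rabs_pos (phi (xs' (S m)) (ys' (S m)) - phi (xs' m) (ys' m))).
    rewrite (arz_comp phi (fun _ => an a b 0)). lra.
  - intros i Hi. unfold xs', ys'. destruct (Nat.leb_spec i m); [auto|lia].
Qed.

Lemma BV_Fk n : (1 <= n)%nat -> BV (Fk a b phi n) (an a b (n - 1)) (an a b n) c d K.
Proof. intros Hn. destruct n as [|[|k]]; [lia| |].
  - exact HBV.
  - intros m xs ys Hx0 Hxm Hy0 Hym Hxmono Hymono.
    set (N := INR (S (S k))).
    assert (HN : 1 < N) by (unfold N; rewrite !S_INR; pose proof (pos_INR k); lra).
    change (arz_sum (fun x y => / N * (fun x y => phi (psi a b (S (S k)) x) y) x y + (N - 1) / N * (fun x y => phi (an a b 0) y) x y) xs ys m <= K).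
    eapply Rle_trans. apply arz_lin. apply Rlt_le, Rinv_0_lt_compat; lra. apply Rdiv_le_0_compat; lra.
    assert (H1 : arz_sum (fun x y => phi (psi a b (S (S k)) x) y) xs ys m <= K).
    { rewrite arz_comp. apply HBV.
      - rewrite Hx0. replace (S (S k) - 1)%nat with (S k) by lia. pose proof (psi_left a b (S (S k)) Hab ltac:(lia)).
        replace (S (S k) - 1)%nat with (S k) in H by lia. auto.
      - rewrite Hxm. apply psi_right; [exact Hab|lia].
      - auto.
      - auto.
      - intros i Hi. apply psi_mono; auto.
      - auto. }
    assert (H2 : arz_sum (fun x y => phi (an a b 0) y) xs ys m <= K).
    { apply BV_const; auto. }
    assert (/ N * arz_sum (fun x y => phi (psi a b (S (S k)) x) y) xs ys m <= / N * K).
    { apply Rmult_le_compat_l; auto. apply Rlt_le, Rinv_0_lt_compat; lra. }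
    assert ((N - 1) / N * arz_sum (fun x y => phi (an a b 0) y) xs ys m <= (N - 1) / N * K).
    { apply Rmult_le_compat_l; auto. apply Rdiv_le_0_compat; lra. }
    assert (/ N * K + (N - 1) / N * K = K) by (field; lra). lra.
Qed.

Lemma phi_bound x y : an a b 0 <= x <= an a b 1 -> c <= y <= d ->
  Rabs (phi x y) <= Rabs (phi (an a b 0) c) + K.
Proof. intros Hx Hy.
  pose proof (chain_bound phi _ _ _ _ K HBV 1%nat (fun _ => an a b 0) (fun _ => c) (fun _ => x) (fun _ => y)) as Hc.
  simpl rsum in Hc. rewrite Rplus_0_l in Hc.
  assert (Rabs (phi x y - phi (an a b 0) c) <= K).
  { pose proof (an_S_ge a b 0 Hab). apply Hc; intros; repeat split; try lia; lra. }
  pose proof (Rabs_triang (phi x y - phi (an a b 0) c) (phi (an a b 0) c)).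
  replace (phi x y - phi (an a b 0) c + phi (an a b 0) c) with (phi x y) in H0 by ring. lra.
Qed.
End BVF.

Lemma pow2_exists M : (1 <= M)%nat -> exists N, (M <= 2 ^ N <= 2 * M)%nat.
Proof. intros HM. destruct (Nat.eq_dec M 1). subst. exists 0%nat. simpl. lia.
  exists (Nat.log2_up M). pose proof (Nat.log2_up_spec M ltac:(lia)) as [H1 H2].
  destruct (Nat.log2_up M) as [|N] eqn:E. simpl in *. lia.
  simpl Nat.pred in H1. rewrite Nat.pow_succ_r in * by lia. lia.
Qed.

Lemma cov_union_bound (F : nat -> R*R*R -> Prop) del S r :
  (forall k, (k < r)%nat -> exists n, covers (F k) del n /\ INR n <= S) ->
  exists n, covers (fun p => exists k, (k < r)%nat /\ F k p) del n /\ INR n <= INR r * S.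
Proof. induction r as [|r IH]; intros H.
  - exists 0%nat. split. apply cov_empty. intros p [k [Hk _]]. lia. simpl. lra.
  - destruct IH as [n1 [C1 B1]]. intros; apply H; lia.
    destruct (H r ltac:(lia)) as [n2 [C2 B2]]. exists (n1 + n2)%nat. split.
    + eapply cov_mono. apply cov_union2. apply C1. apply C2.
      intros p [k [Hk Hp]]. destruct (Nat.eq_dec k r). subst; right; auto. left. exists k. split; auto. lia.
    + rewrite plus_INR, S_INR. lra.
Qed.

Lemma strip_find a b N x : a < b -> (1 <= N)%nat -> an a b 0 <= x <= an a b N ->
  exists k, (k < N)%nat /\ an a b k <= x <= an a b (S k).
Proof. intros Hab. induction N as [|N IH]; intros HN Hx. lia.
  destruct (Nat.eq_dec N 0). subst. exists 0%nat. split. lia. auto.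
  destruct (Rle_dec x (an a b N)).
  - destruct IH as [k [Hk Hk']]. lia. lra. exists k. split. lia. auto.
  - exists N. split. lia. lra.
Qed.

Lemma an_diff a b k : an a b (S k) - an a b k = (b - a) / 2 ^ (S k).
Proof. simpl. lra. Qed.

Section Upper.
Variables (a b c d K : R) (phi : R -> R -> R).
Hypothesis Hab : a < b.
Hypothesis Hcd : c < d.
Hypothesis Hper : forall y, c <= y <= d -> phi (an a b 0) y = phi (an a b 1) y.
Hypothesis HBV : BV phi (an a b 0) (an a b 1) c d K.
Let B := Rabs (phi (an a b 0) c) + K.
Let C1 := (b - a + (d - c) + 2) * (2 * K + 5 * (b - a + 1)) + (d - c + 1) * (2 * B + 3).

Lemma upper h : 0 < h -> h <= 1 -> exists n N0,
  covers (graphT a b c d phi) (sqrt 3 * h) n /\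
  INR n <= (INR N0 + 1) * C1 * (/ h) ^ 2 /\ 2 ^ N0 <= 2 * (b - a + 1) / h.
Proof. intros Hh Hh1.
  pose proof (K_nonneg a b c d K phi Hab Hcd HBV) as HK.
  assert (HB0 : 0 <= B) by (unfold B; pose proof (Rabs_pos (phi (an a b 0) c)); lra).
  destruct (ceil_exists h (b - a) Hh ltac:(lra)) as [M [HM1 HM2]].
  destruct (ceil_exists h (d - c) Hh ltac:(lra)) as [L [HL1 HL2]].
  destruct (ceil_exists h B Hh HB0) as [NB [HN1 HN2]].
  assert (HM : (1 <= M)%nat). { destruct M. simpl in HM1. lra. lia. }
  assert (HL : (1 <= L)%nat). { destruct L. simpl in HL1. lra. lia. }
  destruct (pow2_exists M HM) as [N0 HN0].
  assert (HN0r : INR M <= 2 ^ N0 <= 2 * INR M).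
  { assert (E2 : INR (2 ^ N0) = 2 ^ N0) by (rewrite pow_INR; simpl; f_equal; lra).
    rewrite <- E2. split. apply le_INR; lia.
    replace (2 * INR M) with (INR (2 * M)) by (rewrite mult_INR; simpl; lra). apply le_INR; lia. }
  set (SS := INR (M + L) * (2 * K / h + 5 * INR M)).
  assert (Hpos : forall n, 0 < 2 ^ n) by (intros; apply pow_lt; lra).
  destruct (cov_union_bound (fun k => graph_rect (Fk a b phi (S k)) (an a b k) (an a b (S k)) c d)
             (sqrt 3 * h) SS N0) as [ns [Cs Bs]].
  { intros k Hk. apply strip_cover; auto.
    - pose proof (BV_Fk a b c d K phi Hab Hcd HBV (S k) ltac:(lia)). replace (S k - 1)%nat with k in H by lia. auto.
    - pose proof (an_diff a b k). pose proof (Hpos (S k)). assert (0 < (b-a)/2^S k) by (apply Rdiv_lt_0_compat; lra). lra.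
    - apply Rmult_le_reg_r with (INR M). apply lt_0_INR; lia.
      unfold Rdiv at 1. rewrite Rmult_assoc, Rinv_l, Rmult_1_r by (apply not_0_INR; lia).
      rewrite an_diff. assert ((b - a) / 2 ^ S k <= b - a).
      { unfold Rdiv. pose proof (Hpos (S k)). assert (1 <= 2 ^ S k) by (apply pow_R1_Rle; lra).
        assert (/ 2 ^ S k <= 1). { rewrite <- Rinv_1. apply Rinv_le_contravar; lra. }
        nra. }
      lra.
    - apply Rmult_le_reg_r with (INR L). apply lt_0_INR; lia.
      unfold Rdiv at 1. rewrite Rmult_assoc, Rinv_l, Rmult_1_r by (apply not_0_INR; lia). lra. }
  set (v := (d - c) / INR L).
  assert (Hv : 0 < v) by (unfold v; apply Rdiv_lt_0_compat; [lra|apply lt_0_INR; lia]).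
  assert (HvL : INR L * v = d - c) by (unfold v; field; apply not_0_INR; lia).
  assert (Hvh : v <= h).
  { apply Rmult_le_reg_r with (INR L). apply lt_0_INR; lia. lra. }
  assert (Hwt : 0 <= b - an a b N0 <= h).
  { rewrite an_closed. replace (b - (b - (b - a) / 2 ^ N0)) with ((b - a) / 2 ^ N0) by ring.
    pose proof (Hpos N0). split. apply Rdiv_le_0_compat; lra.
    apply Rmult_le_reg_r with (2 ^ N0); auto. unfold Rdiv. rewrite Rmult_assoc, Rinv_l, Rmult_1_r by lra.
    nra. }
  pose proof (cov_big (fun j p => let '(x, y, z) := p in an a b N0 <= x <= an a b N0 + (b - an a b N0) /\
       c + INR j * v <= y <= c + INR j * v + v /\ 0 - INR NB * h <= z <= 0 + INR NB * h)
       (fun _ => (2 * NB + 1)%nat) (sqrt 3 * h) L) as Ct.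
  assert (Ct' : covers (fun p => exists k, (k < L)%nat /\ (let '(x, y, z) := p in an a b N0 <= x <= an a b N0 + (b - an a b N0) /\
       c + INR k * v <= y <= c + INR k * v + v /\ 0 - INR NB * h <= z <= 0 + INR NB * h)) (sqrt 3 * h) (nsum (fun _ => (2 * NB + 1)%nat) L)).
  { apply Ct. intros k Hk. apply slab_cover; auto. lra. }
  clear Ct.
  exists (ns + nsum (fun _ => (2 * NB + 1)%nat) L)%nat, N0. split; [|split].
  - eapply cov_mono. apply cov_union2. apply Cs. apply Ct'.
    intros [[x y] z] [Hx [Hy Hz]].
    destruct (Rlt_dec x (an a b N0)) as [Hlt|Hge].
    + left. assert (HN0' : (1 <= N0)%nat). { destruct N0. simpl in Hlt. lra. lia. }
      destruct (strip_find a b N0 x Hab HN0' ltac:(simpl; lra)) as [k [Hk Hk']].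
      exists k. split; auto. unfold graph_rect. split; auto. split; auto.
      rewrite Hz. apply (T_val a b c d phi Hab Hper (S k)); auto. lia. replace (S k - 1)%nat with k by lia. auto.
    + right. destruct (grid_find L v (y - c) Hv HL ltac:(lra)) as [j [Hj Hj']].
      exists j. split; auto. split. lra. split. rewrite S_INR in Hj'. lra.
      assert (Rabs z <= B).
      { rewrite Hz. apply (T_bound a b c d phi Hab Hper B); auto.
        intros; apply (phi_bound a b c d K phi Hab Hcd HBV); auto. lra. }
      apply Rabs_le_between in H. lra.
  - rewrite plus_INR, INR_nsum, rsum_const.
    set (u := / h).
    assert (Hu : 1 <= u). { unfold u. rewrite <- Rinv_1. apply Rinv_le_contravar; lra. }
    assert (Hhu : h * u = 1) by (unfold u; field; lra).
    assert (Hm : INR M <= (b - a + 1) * u).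
    { replace (INR M) with (INR M * h * u) by (rewrite Rmult_assoc, Hhu; ring). apply Rmult_le_compat_r; lra. }
    assert (Hl : INR L <= (d - c + 1) * u).
    { replace (INR L) with (INR L * h * u) by (rewrite Rmult_assoc, Hhu; ring). apply Rmult_le_compat_r; lra. }
    assert (Hnb : INR NB <= (B + 1) * u).
    { replace (INR NB) with (INR NB * h * u) by (rewrite Rmult_assoc, Hhu; ring). apply Rmult_le_compat_r; lra. }
    pose proof (pos_INR M). pose proof (pos_INR L). pose proof (pos_INR NB). pose proof (pos_INR N0).
    assert (HSS : SS <= (b - a + (d - c) + 2) * (2 * K + 5 * (b - a + 1)) * u ^ 2).
    { unfold SS. rewrite plus_INR. replace (2 * K / h) with (2 * K * u) by (unfold u; field; lra).
      replace ((b - a + (d - c) + 2) * (2 * K + 5 * (b - a + 1)) * u ^ 2) with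
        (((b - a + 1) * u + (d - c + 1) * u) * (2 * K * u + 5 * ((b - a + 1) * u))) by ring.
      apply Rmult_le_compat; try nra. }
    assert (HT : INR L * INR (2 * NB + 1) <= (d - c + 1) * (2 * B + 3) * u ^ 2).
    { rewrite plus_INR, mult_INR. simpl (INR 2). simpl (INR 1).
      replace ((d - c + 1) * (2 * B + 3) * u ^ 2) with (((d - c + 1) * u) * (2 * ((B + 1) * u) + u)) by ring.
      apply Rmult_le_compat; try nra. }
    assert (HA : 0 <= (b - a + (d - c) + 2) * (2 * K + 5 * (b - a + 1)) * u ^ 2).
    { apply Rmult_le_pos. apply Rmult_le_pos; lra. nra. }
    assert (HT0 : 0 <= (d - c + 1) * (2 * B + 3) * u ^ 2).
    { apply Rmult_le_pos. apply Rmult_le_pos; lra. nra. }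
    assert (INR ns <= INR N0 * ((b - a + (d - c) + 2) * (2 * K + 5 * (b - a + 1)) * u ^ 2)).
    { eapply Rle_trans. apply Bs. apply Rmult_le_compat_l; auto. }
    unfold C1.
    replace ((INR N0 + 1) * ((b - a + (d - c) + 2) * (2 * K + 5 * (b - a + 1)) + (d - c + 1) * (2 * B + 3)) * u ^ 2)
      with (INR N0 * ((b - a + (d - c) + 2) * (2 * K + 5 * (b - a + 1)) * u ^ 2) +
            (b - a + (d - c) + 2) * (2 * K + 5 * (b - a + 1)) * u ^ 2 +
            INR N0 * ((d - c + 1) * (2 * B + 3) * u ^ 2) +
            (d - c + 1) * (2 * B + 3) * u ^ 2) by ring.
    assert (0 <= INR N0 * ((d - c + 1) * (2 * B + 3) * u ^ 2)) by (apply Rmult_le_pos; lra).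
    lra.
  - assert (INR M <= (b - a + 1) / h).
    { apply Rmult_le_reg_r with h; auto. unfold Rdiv. rewrite Rmult_assoc, Rinv_l, Rmult_1_r by lra. lra. }
    unfold Rdiv in *. lra.
Qed.
End Upper.

Lemma cov_diam (F : R*R*R -> Prop) d1 d2 n : covers F d1 n -> d1 <= d2 -> covers F d2 n.
Proof. intros [U [H1 H2]] Hd. exists U. split; auto. intros i Hi p q Hp Hq. eapply Rle_trans. apply (H1 i Hi p q Hp Hq). auto. Qed.

Lemma dist3_ge_x x1 y1 z1 x2 y2 z2 : Rabs (x1 - x2) <= dist3 (x1, y1, z1) (x2, y2, z2).
Proof. unfold dist3. rewrite <- sqrt_Rsqr_abs. apply sqrt_le_1_alt. unfold Rsqr.
  pose proof (pow2_ge_0 (y1-y2)). pose proof (pow2_ge_0 (z1-z2)).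
  replace ((x1-x2)*(x1-x2)) with ((x1-x2)^2) by ring. lra. Qed.
Lemma dist3_ge_y x1 y1 z1 x2 y2 z2 : Rabs (y1 - y2) <= dist3 (x1, y1, z1) (x2, y2, z2).
Proof. unfold dist3. rewrite <- sqrt_Rsqr_abs. apply sqrt_le_1_alt. unfold Rsqr.
  pose proof (pow2_ge_0 (x1-x2)). pose proof (pow2_ge_0 (z1-z2)).
  replace ((y1-y2)*(y1-y2)) with ((y1-y2)^2) by ring. lra. Qed.

Lemma nat_sep i i' s : 0 < s -> i <> i' -> s <= Rabs (INR i * s - INR i' * s).
Proof. intros Hs Hii. destruct (Nat.lt_total i i') as [H|[H|H]]; [|lia|].
  - apply (proj2 (Nat.le_succ_l _ _)) in H. apply le_INR in H. rewrite S_INR in H. rewrite Rabs_minus_sym.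
    rewrite Rabs_pos_eq; nra.
  - apply (proj2 (Nat.le_succ_l _ _)) in H. apply le_INR in H. rewrite S_INR in H.
    rewrite Rabs_pos_eq; nra.
Qed.

Section Lower.
Variables (a b c d : R) (phi : R -> R -> R).
Hypothesis Hab : a < b.
Hypothesis Hcd : c < d.

Lemma lower del n : 0 < del -> covers (graphT a b c d phi) del n ->
  ((b - a) / (2 * del)) * ((d - c) / (2 * del)) <= INR n.
Proof. intros Hd [U [HU1 HU2]].
  set (s := 2 * del). assert (Hs : 0 < s) by (unfold s; lra).
  destruct (ceil_exists s (b - a) Hs ltac:(lra)) as [I [HI1 HI2]].
  destruct (ceil_exists s (d - c) Hs ltac:(lra)) as [J [HJ1 HJ2]].
  assert (HJ : J <> 0%nat). { intros ->. simpl in HJ1. lra. }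
  set (pt := fun q : nat => (a + INR (q / J) * s, c + INR (q mod J) * s,
                            Tlim a b phi (a + INR (q / J) * s) (c + INR (q mod J) * s))).
  assert (HP : (I * J <= n)%nat).
  { apply (pigeon n (I * J) (fun q k => (k < n)%nat /\ U k (pt q))).
    - intros q Hq. destruct (HU2 (pt q)) as [k [Hk Hk']]. 2:{ exists k. auto. } unfold pt, graphT.
      assert (Hi : (q / J < I)%nat) by (apply Nat.div_lt_upper_bound; lia).
      assert (Hj : (q mod J < J)%nat) by (apply Nat.mod_upper_bound; auto).
      apply (proj2 (Nat.le_succ_l _ _)), le_INR in Hi. apply (proj2 (Nat.le_succ_l _ _)), le_INR in Hj. rewrite S_INR in Hi, Hj.
      pose proof (pos_INR (q / J)). pose proof (pos_INR (q mod J)).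
      split; [|split; [|auto]]; split; nra.
    - intros q q' k Hq Hq' [Hk H1] [_ H2]. apply Classical_Prop.NNPP. intros Hne.
      pose proof (HU1 k Hk _ _ H1 H2) as Hd12. unfold pt in Hd12.
      destruct (Nat.eq_dec (q / J) (q' / J)) as [E1|E1].
      + destruct (Nat.eq_dec (q mod J) (q' mod J)) as [E2|E2].
        * apply Hne. rewrite (Nat.div_mod_eq q J), (Nat.div_mod_eq q' J). rewrite E1, E2. auto.
        * pose proof (dist3_ge_y (a + INR (q / J) * s) (c + INR (q mod J) * s)
             (Tlim a b phi (a + INR (q / J) * s) (c + INR (q mod J) * s))
             (a + INR (q' / J) * s) (c + INR (q' mod J) * s)
             (Tlim a b phi (a + INR (q' / J) * s) (c + INR (q' mod J) * s))).
          pose proof (nat_sep _ _ s Hs E2).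
          replace (c + INR (q mod J) * s - (c + INR (q' mod J) * s)) with (INR (q mod J) * s - INR (q' mod J) * s) in H by ring.
          unfold s in *. lra.
      + pose proof (dist3_ge_x (a + INR (q / J) * s) (c + INR (q mod J) * s)
             (Tlim a b phi (a + INR (q / J) * s) (c + INR (q mod J) * s))
             (a + INR (q' / J) * s) (c + INR (q' mod J) * s)
             (Tlim a b phi (a + INR (q' / J) * s) (c + INR (q' mod J) * s))).
        pose proof (nat_sep _ _ s Hs E1).
        replace (a + INR (q / J) * s - (a + INR (q' / J) * s)) with (INR (q / J) * s - INR (q' / J) * s) in H by ring.
        unfold s in *. lra. }
  apply le_INR in HP. rewrite mult_INR in HP.
  assert ((b - a) / s <= INR I).
  { apply Rmult_le_reg_r with s; auto. unfold Rdiv. rewrite Rmult_assoc, Rinv_l, Rmult_1_r by lra. lra. }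
  assert ((d - c) / s <= INR J).
  { apply Rmult_le_reg_r with s; auto. unfold Rdiv. rewrite Rmult_assoc, Rinv_l, Rmult_1_r by lra. lra. }
  assert (0 <= (b - a) / s) by (apply Rdiv_le_0_compat; lra).
  assert (0 <= (d - c) / s) by (apply Rdiv_le_0_compat; lra).
  eapply Rle_trans. 2: apply HP. apply Rmult_le_compat; auto.
Qed.
End Lower.

Lemma ln_le_2sqrt y : 0 < y -> ln y <= 2 * sqrt y.
Proof. intros Hy. set (u := sqrt y). assert (Hu : 0 < u) by (apply sqrt_lt_R0; auto).
  assert (y = u * u) by (unfold u; rewrite sqrt_sqrt; lra).
  rewrite H, ln_mult by auto.
  assert (ln u < u).
  { rewrite <- (ln_exp u) at 2. apply ln_increasing; auto. pose proof (exp_ineq1 u ltac:(lra)). lra. }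
  lra.
Qed.

Lemma sqrt_small L e : 0 < e -> 0 < L -> 48 / (e * e) < L -> 2 * sqrt (3 * L) < e * L / 2.
Proof. intros He HL H. set (t := sqrt (3 * L)).
  assert (Ht : 0 <= t) by (apply sqrt_pos). assert (Ht2 : t * t = 3 * L) by (unfold t; rewrite sqrt_sqrt; lra).
  assert (48 < e * e * L).
  { apply Rmult_lt_compat_r with (r := e * e) in H. unfold Rdiv in H.
    rewrite Rmult_assoc, Rinv_l, Rmult_1_r in H by nra. nra. nra. }
  destruct (Rlt_dec (2 * t) (e * L / 2)) as [Hl|Hl]; auto. exfalso.
  apply Rnot_lt_le in Hl. assert (0 <= e * L / 2) by nra.
  assert ((e * L / 2) * (e * L / 2) <= (2 * t) * (2 * t)) by (apply Rmult_le_compat; lra).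
  nra.
Qed.

Theorem mainTheorem10 (a b c d : R) (phi : R -> R -> R) :
  a < b -> c < d ->
  continuous_on_rect phi (an a b 0) (an a b 1) c d ->
  (forall y, c <= y <= d -> phi (an a b 0) y = phi (an a b 1) y) ->
  arzela_BV phi (an a b 0) (an a b 1) c d ->
  box_dim_eq (graphT a b c d phi) 2.
Proof.
  intros Hab Hcd _ Hper [K HBV0].
  assert (HBV : BV phi (an a b 0) (an a b 1) c d K) by exact HBV0. clear HBV0.
  pose proof (K_nonneg a b c d K phi Hab Hcd HBV) as HK.
  set (C1 := (b - a + (d - c) + 2) * (2 * K + 5 * (b - a + 1)) +
          (d - c + 1) * (2 * (Rabs (phi (an a b 0) c) + K) + 3)).
  assert (HC1 : 0 < C1).
  { unfold C1. pose proof (Rabs_pos (phi (an a b 0) c)).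
    assert (0 < (b - a + (d - c) + 2) * (2 * K + 5 * (b - a + 1))) by (apply Rmult_lt_0_compat; lra).
    assert (0 <= (d - c + 1) * (2 * (Rabs (phi (an a b 0) c) + K) + 3)) by (apply Rmult_le_pos; lra). lra. }
  set (s3 := sqrt 3).
  assert (Hs3 : s3 * s3 = 3) by (unfold s3; rewrite sqrt_sqrt; lra).
  assert (Hs3p : 0 < s3) by (unfold s3; apply sqrt_lt_R0; lra).
  assert (Hs31 : 1 < s3) by nra.
  split.
  - intros del Hdel. destruct (Rle_dec del 1) as [H1|H1].
    + destruct (upper a b c d K phi Hab Hcd Hper HBV (del / s3)) as [n [N0 [Hc _]]].
      apply Rdiv_lt_0_compat; lra.
      apply Rmult_le_reg_r with s3; auto. unfold Rdiv. rewrite Rmult_assoc, Rinv_l, Rmult_1_r by lra. nra.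
      exists n. replace del with (sqrt 3 * (del / s3)). auto. unfold s3. field. fold s3. lra.
    + destruct (upper a b c d K phi Hab Hcd Hper HBV (1 / s3)) as [n [N0 [Hc _]]].
      apply Rdiv_lt_0_compat; lra.
      apply Rmult_le_reg_r with s3; auto. unfold Rdiv. rewrite Rmult_assoc, Rinv_l, Rmult_1_r by lra. nra.
      exists n. eapply cov_diam. apply Hc. replace (sqrt 3 * (1 / s3)) with 1. lra. unfold s3. field. fold s3. lra.
  - intros eps Heps.
    set (c0 := (b - a) * (d - c) / 4).
    assert (Hc0 : 0 < c0) by (unfold c0; apply Rdiv_lt_0_compat; [apply Rmult_lt_0_compat|]; lra).
    set (c2 := ln (2 * s3 * (b - a + 1))).
    set (Lreq := 1 + 2 * Rabs c2 + Rabs (ln c0) / eps + 2 * Rabs (ln (3 * C1)) / eps + 48 / (eps * eps)).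
    assert (HLr : forall x, 0 <= x -> 0 <= x / eps) by (intros; apply Rdiv_le_0_compat; lra).
    pose proof (HLr _ (Rabs_pos (ln c0))). pose proof (HLr _ (Rabs_pos (ln (3 * C1)))).
    assert (0 <= 2 * Rabs (ln (3 * C1)) / eps).
    { unfold Rdiv. rewrite Rmult_assoc. pose proof (Rabs_pos (ln (3 * C1))). apply Rmult_le_pos. lra. apply HLr. auto. }
    assert (0 <= 48 / (eps * eps)) by (apply Rdiv_le_0_compat; nra).
    pose proof (Rabs_pos c2).
    exists (Rmin 1 (exp (- Lreq))). split.
    { apply Rmin_glb_lt. lra. apply exp_pos. }
    intros del N [Hd1 Hd2] [HNc HNmin].
    assert (Hdlt1 : del < 1) by (eapply Rlt_le_trans; [apply Hd2|apply Rmin_l]).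
    assert (HdL : del < exp (- Lreq)) by (eapply Rlt_le_trans; [apply Hd2|apply Rmin_r]).
    set (Ld := - ln del).
    assert (HLd : Lreq < Ld).
    { unfold Ld. apply ln_increasing in HdL; auto. rewrite ln_exp in HdL. lra. }
    assert (HLd1 : 1 <= Ld) by (unfold Lreq in HLd; lra).
    destruct (upper a b c d K phi Hab Hcd Hper HBV (del / s3)) as [n [N0 [Hc [Hn HN0]]]].
    apply Rdiv_lt_0_compat; lra.
    apply Rmult_le_reg_r with s3; auto. unfold Rdiv. rewrite Rmult_assoc, Rinv_l, Rmult_1_r by lra. nra.
    fold C1 in Hn.
    assert (HNn : (N <= n)%nat).
    { apply HNmin. replace del with (sqrt 3 * (del / s3)). auto. unfold s3. field. fold s3. lra. }
    pose proof (lower a b c d phi Hab Hcd del N Hd1 HNc) as Hlow.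
    assert (Hid : (/ (del / s3)) ^ 2 = 3 * (/ del) ^ 2).
    { replace (/ (del / s3)) with (s3 * / del) by (field; lra). simpl. rewrite <- Hs3. ring. }
    rewrite Hid in Hn.
    assert (Hlow' : c0 * (/ del) ^ 2 <= INR N).
    { eapply Rle_trans. 2: apply Hlow. right. unfold c0. field. lra. }
    apply le_INR in HNn.
    assert (Hup : INR N <= (3 * C1) * (INR N0 + 1) * (/ del) ^ 2) by lra.
    assert (Hdi : 0 < / del) by (apply Rinv_0_lt_compat; lra).
    assert (Hlnd : ln ((/ del) ^ 2) = 2 * Ld) by (rewrite ln_pow, ln_Rinv by lra; unfold Ld; simpl; ring).
    assert (HNpos : 0 < INR N).
    { eapply Rlt_le_trans. 2: apply Hlow'. apply Rmult_lt_0_compat; auto. apply pow_lt; auto. }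
    pose proof (pos_INR N0) as HN0p.
    assert (Hl1 : ln c0 + 2 * Ld <= ln (INR N)).
    { rewrite <- Hlnd, <- ln_mult by (try apply pow_lt; auto). apply ln_le; auto.
      apply Rmult_lt_0_compat; auto. apply pow_lt; auto. }
    assert (HN0b : INR N0 * ln 2 <= c2 + Ld).
    { rewrite <- ln_pow by lra. replace (2 * (b - a + 1) / (del / s3)) with ((2 * s3 * (b - a + 1)) * / del) in HN0 by (field; lra).
      unfold c2, Ld. rewrite <- ln_Rinv by lra. rewrite <- ln_mult by (try apply Rmult_lt_0_compat; try lra; auto).
      apply ln_le. apply pow_lt; lra. auto. }
    pose proof ln_lt_2.
    assert (HN03 : INR N0 + 1 <= 3 * Ld).
    { assert (INR N0 * / 2 <= INR N0 * ln 2) by (apply Rmult_le_compat_l; lra).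
      unfold Lreq in HLd. assert (c2 <= Rabs c2) by apply Rle_abs. lra. }
    assert (Hl2 : ln (INR N) <= ln (3 * C1) + 2 * sqrt (3 * Ld) + 2 * Ld).
    { eapply Rle_trans. apply ln_le; auto. apply Hup.
      rewrite !ln_mult by (try apply Rmult_lt_0_compat; try apply pow_lt; lra).
      rewrite Hlnd. assert (ln (INR N0 + 1) <= 2 * sqrt (3 * Ld)).
      { eapply Rle_trans. apply ln_le. lra. apply HN03. apply ln_le_2sqrt. lra. }
      lra. }
    assert (HLdp : 0 < Ld) by lra.
    assert (Hs : 2 * sqrt (3 * Ld) < eps * Ld / 2) by (apply sqrt_small; auto; unfold Lreq in HLd; lra).
    assert (HA : Rabs (ln c0) < eps * Ld).
    { assert (Rabs (ln c0) / eps < Ld) by (unfold Lreq in HLd; lra).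
      apply Rmult_lt_compat_l with (r := eps) in H5; auto. unfold Rdiv in H5.
      replace (eps * (Rabs (ln c0) * / eps)) with (Rabs (ln c0)) in H5 by (field; lra). lra. }
    assert (HB' : Rabs (ln (3 * C1)) < eps * Ld / 2).
    { assert (2 * Rabs (ln (3 * C1)) / eps < Ld) by (unfold Lreq in HLd; lra).
      apply Rmult_lt_compat_l with (r := eps) in H5; auto. unfold Rdiv in H5.
      replace (eps * (2 * Rabs (ln (3 * C1)) * / eps)) with (2 * Rabs (ln (3 * C1))) in H5 by (field; lra). lra. }
    pose proof (Rle_abs (ln c0)). pose proof (Rabs_pos (ln c0)).
    pose proof (Rle_abs (ln (3 * C1))).
    fold Ld.
    assert (Hr : ln (INR N) / Ld - 2 = (ln (INR N) - 2 * Ld) / Ld) by (field; lra).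
    pose proof (Rabs_le_between (ln c0) (Rabs (ln c0))) as [HH _]. specialize (HH (Rle_refl _)).
    rewrite Hr. apply Rabs_def1.
    + apply Rmult_lt_reg_r with Ld; auto. unfold Rdiv. rewrite Rmult_assoc, Rinv_l, Rmult_1_r by lra.
      lra.
    + apply Rmult_lt_reg_r with Ld; auto. unfold Rdiv. rewrite Rmult_assoc, Rinv_l, Rmult_1_r by lra.
      lra.
Qed.
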